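(* Let $\mathfrak{s}(1/1)$ be the complex Lie superalgebra described in the context, let $d\in\mathbb{R}$, let $m\neq 0$, and let $V^d$ be the Verma module over $\mathfrak{s}(1/1)$ with lowest weight vector $v_0$ satisfying $\mathcal{Q}v_0=Pv_0=0$, $Dv_0=-d\,v_0$, $Mv_0=m\,v_0$, $\mathcal{X}v_0=\chi v_0$, where $\chi$ is an odd (Grassmann) parameter with $m=2\chi^2$. Then $V^d$ has precisely one singular vector (up to a nonzero scalar multiple) if and only if $d+\tfrac12\in\mathbb{Z}_{\geq 0}$, and in that case it is $$v_s=(G^2-2mK)^{d+1/2}\,(G-2\chi\mathcal{S})\,v_0 .$$
   Context: $\mathfrak{s}(1/1)$ (the $\mathcal{N}=1$ super Schrödinger algebra in $(1+1)$-dimensional spacetime) is the Lie superalgebra with even basis $H,D,K,P,G,M$ and odd basis $\mathcal{Q},\mathcal{S},\mathcal{X}$, whose nonvanishing brackets among basis elements are (up to (anti)symmetry): $[H,D]=2H$, $[H,K]=D$, $[D,K]=2K$, $[P,G]=M$, $[H,G]=P$, $[D,G]=G$, $[P,D]=P$, $[P,K]=G$; $\{\mathcal{Q},\mathcal{Q}\}=-2H$, $\{\mathcal{S},\mathcal{S}\}=-2K$, $\{\mathcal{X},\mathcal{X}\}=-M$, $\{\mathcal{Q},\mathcal{X}\}=-P$, $\{\mathcal{S},\mathcal{X}\}=-G$, $\{\mathcal{Q},\mathcal{S}\}=-D$; $[\mathcal{Q},D]=\mathcal{Q}$, $[\mathcal{Q},K]=\mathcal{S}$, $[D,\mathcal{S}]=\mathcal{S}$,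 $[H,\mathcal{S}]=\mathcal{Q}$, $[\mathcal{Q},G]=\mathcal{X}$, $[P,\mathcal{S}]=\mathcal{X}$. It is $\mathbb{Z}$-graded by $\deg K=2$, $\deg G=\deg\mathcal{S}=1$, $\deg D=\deg M=\deg\mathcal{X}=0$, $\deg P=\deg\mathcal{Q}=-1$, $\deg H=-2$; $\mathfrak{g}^+$, $\mathfrak{g}^0$, $\mathfrak{g}^-$ denote the spans of the generators of positive, zero, negative degree. A lowest weight vector $v_0$ is annihilated by $\mathfrak{g}^-$ and is an eigenvector of $\mathfrak{g}^0$ as stated in the claim (the odd parameter $\chi$ anticommutes with the odd generators). The Verma module is $V^d=U(\mathfrak{g}^+)v_0$, with basis $\{G^kK^\ell v_0,\ G^kK^\ell\mathcal{S}v_0 : k,\ell\in\mathbb{Z}_{\ge 0}\}$. A singular vector is a homogeneous element $v_s\in V^d$ (an eigenvector of $D$) with $v_s\notin\mathbb{C}v_0$ and $\mathfrak{g}^-v_s=0$. *)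

(* Defs.v *)
From HB Require Import structures.
From mathcomp Require Import all_boot all_order all_algebra.
From mathcomp Require Import reals complex.
Set Implicit Arguments. Unset Strict Implicit. Unset Printing Implicit Defensive.
Import Order.TTheory GRing.Theory Num.Theory.
Local Open Scope ring_scope.

Section S11.
Variables (R : realType) (V : lmodType R[i]).

Definition comm (f g : V -> V) (v : V) : V := f (g v) - g (f v).
Definition acomm (f g : V -> V) (v : V) : V := f (g v) + g (f v).

(* A representation of s(1/1) on V, together with the odd parameter chi
   realised as the (C-linear) operator "multiplication by chi" on V.
   Generators: even H D K P G M, odd Q S X. *)
Record s11_ops := S11Ops {
  opH : {linear V -> V}; opD : {linear V -> V}; opK : {linear V -> V};
  opP : {linear V -> V}; opG : {linear V -> V}; opM : {linear V -> V};
  opQ : {linear V -> V}; opS : {linear V -> V}; opX : {linear V -> V};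
  opchi : {linear V -> V} }.

Variable o : s11_ops.
Local Notation H := (opH o). Local Notation D := (opD o).
Local Notation K := (opK o). Local Notation P := (opP o).
Local Notation G := (opG o). Local Notation M := (opM o).
Local Notation Q := (opQ o). Local Notation S := (opS o).
Local Notation X := (opX o). Local Notation chi := (opchi o).

Definition is_s11_rep : Prop := forall v : V,
  comm H D v = 2%:R *: H v /\ comm H K v = D v /\ comm H P v = 0 /\
  comm H G v = P v /\ comm H M v = 0 /\ comm D K v = 2%:R *: K v /\
  comm P D v = P v /\ comm D G v = G v /\ comm D M v = 0 /\
  comm P K v = G v /\ comm K G v = 0 /\ comm K M v = 0 /\
  comm P G v = M v /\ comm P M v = 0 /\ comm G M v = 0 /\
  comm H Q v = 0 /\ comm H S v = Q v /\ comm H X v = 0 /\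
  comm Q D v = Q v /\ comm D S v = S v /\ comm D X v = 0 /\
  comm Q K v = S v /\ comm K S v = 0 /\ comm K X v = 0 /\
  comm P Q v = 0 /\ comm P S v = X v /\ comm P X v = 0 /\
  comm Q G v = X v /\ comm G S v = 0 /\ comm G X v = 0 /\
  comm M Q v = 0 /\ comm M S v = 0 /\ comm M X v = 0 /\
  acomm Q Q v = - (2%:R *: H v) /\ acomm S S v = - (2%:R *: K v) /\
  acomm X X v = - M v /\ acomm Q X v = - P v /\ acomm S X v = - G v /\
  acomm Q S v = - D v.

Definition is_odd_param (m : R[i]) : Prop := forall v : V,
  chi (chi v) = (m / 2%:R) *: v /\
  comm chi H v = 0 /\ comm chi D v = 0 /\ comm chi K v = 0 /\
  comm chi P v = 0 /\ comm chi G v = 0 /\ comm chi M v = 0 /\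
  acomm chi Q v = 0 /\ acomm chi S v = 0 /\ acomm chi X v = 0.

Definition pbw (v0 : V) (k l : nat) (s c : bool) : V :=
  iter c chi (iter k G (iter l K (iter s S v0))).

Definition pbw_sum (v0 : V) (n : nat) (f : nat -> nat -> bool -> bool -> R[i]) : V :=
  \sum_(k < n) \sum_(l < n) \sum_(s : bool) \sum_(c : bool)
     f k l s c *: pbw v0 k l s c.

(* V is the Verma module V^d with lowest weight vector v0:
   the PBW vectors form a basis of V (over C; equivalently
   {G^k K^l v0, G^k K^l S v0} is a basis over C[chi]) *)
Definition is_verma (d : R) (m : R[i]) (v0 : V) : Prop :=
  [/\ is_s11_rep, is_odd_param m,
      (Q v0 = 0 /\ P v0 = 0 /\ H v0 = 0 /\ D v0 = - (Complex d 0 *: v0) /\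
          M v0 = m *: v0 /\ X v0 = chi v0),
      (forall v : V, exists n f, v = pbw_sum v0 n f) &
      (forall n f, pbw_sum v0 n f = 0 ->
         forall (k l : 'I_n) s c, f k l s c = 0)].

Definition singular (v0 v : V) : Prop :=
  [/\ exists lam : R[i], D v = lam *: v,
      ~ (exists a b : R[i], v = a *: v0 + b *: chi v0),
      H v = 0, P v = 0 & Q v = 0].

(* v is unique up to a nonzero scalar a + b chi *)
Definition unique_singular (v0 v : V) : Prop :=
  singular v0 v /\
  forall w, singular v0 w -> exists a b : R[i], w = a *: v + b *: chi v.

Definition vs_formula (m : R[i]) (v0 : V) (n : nat) : V :=
  iter n (fun v => G (G v) - (2%:R * m) *: K v)
       (G v0 - 2%:R *: chi (S v0)).

End S11.

(* Main.v *)
Require Import Defs.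
From HB Require Import structures.
From mathcomp Require Import all_boot all_order all_algebra.
From mathcomp Require Import reals complex.
From mathcomp Require Import ring zify.
Import Order.TTheory GRing.Theory Num.Theory.
Local Open Scope ring_scope.

Module Aux.
Set Implicit Arguments. Unset Strict Implicit. Unset Printing Implicit Defensive.
Section Gen.
Variables (R : realType) (V : lmodType R[i]).

Lemma comm_eq (f g : V -> V) v h : comm f g v = h -> f (g v) = g (f v) + h.
Proof. by move=> <-; rewrite /comm addrC subrK. Qed.
Lemma comm_eq' (f g : V -> V) v h : comm g f v = h -> f (g v) = g (f v) - h.
Proof. by move=> <-; rewrite /comm opprB addrC subrK. Qed.
Lemma acomm_eq (f g : V -> V) v h : acomm f g v = h -> f (g v) = - g (f v) + h.
Proof. by move=> <-; rewrite /acomm addrCA addNr addr0. Qed.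
Lemma acomm_eq' (f g : V -> V) v h : acomm g f v = h -> f (g v) = - g (f v) + h.
Proof. by move=> <-; rewrite /acomm addKr. Qed.

Lemma iter_comm (f g : V -> V) k x : (forall v, f (g v) = g (f v)) ->
  iter k f (g x) = g (iter k f x).
Proof. by move=> h; elim: k => //= k ->; rewrite h. Qed.

Lemma iterD (f : V -> V) k x y : (forall x y, f (x + y) = f x + f y) ->
  iter k f (x + y) = iter k f x + iter k f y.
Proof. by move=> h; elim: k => //= k ->; rewrite h. Qed.
Lemma iterZ (f : V -> V) k a x : (forall a x, f (a *: x) = a *: f x) ->
  iter k f (a *: x) = a *: iter k f x.
Proof. by move=> h; elim: k => //= k ->; rewrite h. Qed.

End Gen.

Section Sums.
Variables (R : realType) (V : lmodType R[i]).
Definition sum4 B (F : nat -> nat -> bool -> bool -> V) : V :=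
  \sum_(k < B) \sum_(l < B) \sum_(s : bool) \sum_(c : bool) F k l s c.

Lemma sum4_ext B F G : (forall k l s c, F k l s c = G k l s c) -> sum4 B F = sum4 B G.
Proof.
move=> h; apply: eq_bigr => k _; apply: eq_bigr => l _; apply: eq_bigr => s _.
by apply: eq_bigr => c _.
Qed.

Lemma sum4D B F G : sum4 B (fun k l s c => F k l s c + G k l s c) = sum4 B F + sum4 B G.
Proof.
rewrite /sum4 -big_split; apply: eq_bigr => k _; rewrite -big_split.
apply: eq_bigr => l _; rewrite -big_split; apply: eq_bigr => s _; by rewrite -big_split.
Qed.

Lemma sum4Z B a F : a *: sum4 B F = sum4 B (fun k l s c => a *: F k l s c).
Proof.
rewrite /sum4 scaler_sumr; apply: eq_bigr => k _; rewrite scaler_sumr.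
apply: eq_bigr => l _; rewrite scaler_sumr; apply: eq_bigr => s _; by rewrite scaler_sumr.
Qed.

Lemma sum4_0 B : sum4 B (fun _ _ _ _ => 0) = 0.
Proof.
rewrite /sum4 big1 // => k _; rewrite big1 // => l _; rewrite big1 // => s _; by rewrite big1.
Qed.

Lemma sum4_lin (A : {linear V -> V}) B F :
  A (sum4 B F) = sum4 B (fun k l s c => A (F k l s c)).
Proof.
rewrite /sum4 linear_sum; apply: eq_bigr => k _; rewrite linear_sum.
apply: eq_bigr => l _; rewrite linear_sum; apply: eq_bigr => s _; by rewrite linear_sum.
Qed.

Lemma sum_down (F : nat -> V) B : F 0%N = 0 -> F B = 0 ->
  \sum_(k < B) F k = \sum_(k < B) F k.+1.
Proof.
move=> h0 hB; rewrite -!(big_mkord (fun _ => true)).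
have e : \sum_(0 <= k < B.+1) F k = F 0%N + \sum_(0 <= k < B) F k.+1 by rewrite big_nat_recl.
have e' : \sum_(0 <= k < B.+1) F k = \sum_(0 <= k < B) F k + F B by rewrite big_nat_recr.
rewrite h0 add0r in e. rewrite hB addr0 in e'. by rewrite -e' e big_mkord.
Qed.

Lemma sum_up (F : nat -> V) B : F B.-1 = 0 ->
  \sum_(k < B) F k = \sum_(k < B) (fun n : nat => if n is n'.+1 then F n' else 0) k.
Proof.
case: B => [|B] /= h; first by rewrite !big_ord0.
rewrite big_ord_recr big_ord_recl /= h addr0 add0r.
by apply: eq_bigr => i _; rewrite add0n.
Qed.

Lemma sum4_kdown B F : (forall l s c, F 0%N l s c = 0) -> (forall l s c, F B l s c = 0) ->
  sum4 B F = sum4 B (fun k => F k.+1).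
Proof.
move=> h0 hB; rewrite /sum4 (@sum_down (fun k => \sum_(l < B) \sum_(s : bool) \sum_(c : bool) F k l s c)) //.
- by rewrite big1 // => l _; rewrite big1 // => s _; rewrite big1.
- by rewrite big1 // => l _; rewrite big1 // => s _; rewrite big1.
Qed.

Lemma sum4_ldown B F : (forall k s c, F k 0%N s c = 0) -> (forall k s c, F k B s c = 0) ->
  sum4 B F = sum4 B (fun k l => F k l.+1).
Proof.
move=> h0 hB; apply: eq_bigr => k _.
rewrite (@sum_down (fun l => \sum_(s : bool) \sum_(c : bool) F k l s c)) //.
- by rewrite big1 // => s _; rewrite big1.
- by rewrite big1 // => s _; rewrite big1.
Qed.

Lemma sum4_kup B F : (forall l s c, F B.-1 l s c = 0) ->
  sum4 B F = sum4 B (fun k l s c => if k is k'.+1 then F k' l s c else 0).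
Proof.
move=> hB; rewrite /sum4 (@sum_up (fun k => \sum_(l < B) \sum_(s : bool) \sum_(c : bool) F k l s c)).
- apply: eq_bigr => -[[|k] hk] _ /=; last by [].
  by rewrite big1 // => l _; rewrite big1 // => s _; rewrite big1.
- by rewrite big1 // => l _; rewrite big1 // => s _; rewrite big1.
Qed.

Lemma sum4_lup B F : (forall k s c, F k B.-1 s c = 0) ->
  sum4 B F = sum4 B (fun k l s c => if l is l'.+1 then F k l' s c else 0).
Proof.
move=> hB; apply: eq_bigr => k _.
rewrite (@sum_up (fun l => \sum_(s : bool) \sum_(c : bool) F k l s c)).
- apply: eq_bigr => -[[|l] hl] _ /=; last by [].
  by rewrite big1 // => s _; rewrite big1.
- by rewrite big1 // => s _; rewrite big1.
Qed.

Lemma sum4_cflip B F : sum4 B F = sum4 B (fun k l s c => F k l s (~~ c)).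
Proof.
apply: eq_bigr => k _; apply: eq_bigr => l _; apply: eq_bigr => s _.
by rewrite !big_bool /= addrC.
Qed.

Lemma sum4_sflip B F : sum4 B F = sum4 B (fun k l s c => F k l (~~ s) c).
Proof.
apply: eq_bigr => k _; apply: eq_bigr => l _.
by rewrite big_bool [in RHS]big_bool /= addrC.
Qed.

End Sums.

Lemma two_split (R : realType) (V : lmodType R[i]) (a : R[i]) (v : V) :
  (2%:R * a) *: v = a *: v + a *: v.
Proof. by rewrite mulr_natl mulr2n scalerDl. Qed.

Section Main.
Variables (R : realType) (V : lmodType R[i]) (o : s11_ops V) (d : R) (m : R[i]) (v0 : V).
Hypothesis hm : m != 0.
Hypothesis hrep : is_s11_rep o.
Hypothesis hodd : is_odd_param o m.
Local Notation Hh := (opH o). Local Notation Dd := (opD o).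
Local Notation Kk := (opK o). Local Notation Pp := (opP o).
Local Notation Gg := (opG o). Local Notation Mm := (opM o).
Local Notation Qq := (opQ o). Local Notation Ss := (opS o).
Local Notation Xx := (opX o). Local Notation ch := (opchi o).
Local Notation dc := (Complex d 0).

Ltac rp v := have := hrep v; have := hodd v; intuition.

Lemma PG v : Pp (Gg v) = Gg (Pp v) + Mm v. Proof. apply: comm_eq; rp v. Qed.
Lemma PK v : Pp (Kk v) = Kk (Pp v) + Gg v. Proof. apply: comm_eq; rp v. Qed.
Lemma PS v : Pp (Ss v) = Ss (Pp v) + Xx v. Proof. apply: comm_eq; rp v. Qed.
Lemma Pch v : Pp (ch v) = ch (Pp v). Proof. rewrite (@comm_eq' _ _ _ _ _ 0) ?subr0 //; rp v. Qed.
Lemma QG v : Qq (Gg v) = Gg (Qq v) + Xx v. Proof. apply: comm_eq; rp v. Qed.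
Lemma QK v : Qq (Kk v) = Kk (Qq v) + Ss v. Proof. apply: comm_eq; rp v. Qed.
Lemma QS v : Qq (Ss v) = - Ss (Qq v) - Dd v. Proof. apply: acomm_eq; rp v. Qed.
Lemma Qch v : Qq (ch v) = - ch (Qq v). Proof. rewrite (@acomm_eq' _ _ _ _ _ 0) ?addr0 //; rp v. Qed.
Lemma XG v : Xx (Gg v) = Gg (Xx v). Proof. rewrite (@comm_eq' _ _ _ _ _ 0) ?subr0 //; rp v. Qed.
Lemma XK v : Xx (Kk v) = Kk (Xx v). Proof. rewrite (@comm_eq' _ _ _ _ _ 0) ?subr0 //; rp v. Qed.
Lemma XS v : Xx (Ss v) = - Ss (Xx v) - Gg v. Proof. apply: acomm_eq'; rp v. Qed.
Lemma Xch v : Xx (ch v) = - ch (Xx v). Proof. rewrite (@acomm_eq' _ _ _ _ _ 0) ?addr0 //; rp v. Qed.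
Lemma DG v : Dd (Gg v) = Gg (Dd v) + Gg v. Proof. apply: comm_eq; rp v. Qed.
Lemma DK v : Dd (Kk v) = Kk (Dd v) + 2%:R *: Kk v. Proof. apply: comm_eq; rp v. Qed.
Lemma DS v : Dd (Ss v) = Ss (Dd v) + Ss v. Proof. apply: comm_eq; rp v. Qed.
Lemma Dch v : Dd (ch v) = ch (Dd v). Proof. rewrite (@comm_eq' _ _ _ _ _ 0) ?subr0 //; rp v. Qed.
Lemma GK v : Gg (Kk v) = Kk (Gg v). Proof. rewrite (@comm_eq' _ _ _ _ _ 0) ?subr0 //; rp v. Qed.
Lemma Gch v : Gg (ch v) = ch (Gg v). Proof. rewrite (@comm_eq' _ _ _ _ _ 0) ?subr0 //; rp v. Qed.
Lemma Kch v : Kk (ch v) = ch (Kk v). Proof. rewrite (@comm_eq' _ _ _ _ _ 0) ?subr0 //; rp v. Qed.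
Lemma GS v : Gg (Ss v) = Ss (Gg v). Proof. rewrite (@comm_eq _ _ _ _ _ 0) ?addr0 //; rp v. Qed.
Lemma KS v : Kk (Ss v) = Ss (Kk v). Proof. rewrite (@comm_eq _ _ _ _ _ 0) ?addr0 //; rp v. Qed.
Lemma Sch v : Ss (ch v) = - ch (Ss v). Proof. rewrite (@acomm_eq' _ _ _ _ _ 0) ?addr0 //; rp v. Qed.
Lemma MG v : Mm (Gg v) = Gg (Mm v). Proof. rewrite (@comm_eq' _ _ _ _ _ 0) ?subr0 //; rp v. Qed.
Lemma MK v : Mm (Kk v) = Kk (Mm v). Proof. rewrite (@comm_eq' _ _ _ _ _ 0) ?subr0 //; rp v. Qed.
Lemma MS v : Mm (Ss v) = Ss (Mm v). Proof. rewrite (@comm_eq _ _ _ _ _ 0) ?addr0 //; rp v. Qed.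
Lemma Mch v : Mm (ch v) = ch (Mm v). Proof. rewrite (@comm_eq' _ _ _ _ _ 0) ?subr0 //; rp v. Qed.
Lemma chch v : ch (ch v) = (m / 2%:R) *: v. Proof. by case: (hodd v). Qed.

Lemma two_neq0 : (2%:R : R[i]) != 0. Proof. by rewrite pnatr_eq0. Qed.

Lemma SS v : Ss (Ss v) = - Kk v.
Proof.
have h : Ss (Ss v) + Ss (Ss v) = - (2%:R *: Kk v) by rp v.
apply: (@scalerI _ _ (2%:R : R[i])); first exact: two_neq0.
by rewrite scalerN -h scaler_nat mulr2n.
Qed.

Lemma QQ v : Qq (Qq v) + Qq (Qq v) = - (2%:R *: Hh v). Proof. rp v. Qed.


Hypothesis hQ0 : Qq v0 = 0.
Hypothesis hP0 : Pp v0 = 0.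
Hypothesis hD0 : Dd v0 = - (dc *: v0).
Hypothesis hM0 : Mm v0 = m *: v0.
Hypothesis hX0 : Xx v0 = ch v0.
Hypothesis hspan : forall v : V, exists n f, v = pbw_sum o v0 n f.
Hypothesis hind : forall n f, pbw_sum o v0 n f = 0 ->
         forall (k l : 'I_n) s c, f k l s c = 0.

Lemma iterZL (f : {linear V -> V}) k a x : iter k f (a *: x) = a *: iter k f x.
Proof. by apply: iterZ => b y; rewrite linearZ. Qed.
Lemma iterDL (f : {linear V -> V}) k x y : iter k f (x + y) = iter k f x + iter k f y.
Proof. by apply: iterD => b y'; rewrite linearD. Qed.
Lemma iter0L (f : {linear V -> V}) k : iter k f 0 = 0.
Proof. by elim: k => //= k ->; rewrite linear0. Qed.
Lemma iterNL (f : {linear V -> V}) k x : iter k f (- x) = - iter k f x.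
Proof. by rewrite -scaleN1r iterZL scaleN1r. Qed.

Lemma kpred (f : V -> V) (a : R[i]) k y :
  (k%:R * a) *: iter k.-1 f (f y) = (k%:R * a) *: iter k f y.
Proof. by case: k => [|k]; rewrite ?mul0r ?scale0r // iterSr. Qed.

Lemma kpred' (f : V -> V) (a : R[i]) k y :
  (k%:R * a) *: f (iter k.-1 f y) = (k%:R * a) *: iter k f y.
Proof. by case: k => [|k]; rewrite ?mul0r ?scale0r. Qed.

Definition w k l (s : bool) := iter k Gg (iter l Kk (iter s Ss v0)).

Lemma Mw k l s : Mm (w k l s) = m *: w k l s.
Proof.
rewrite /w -(iter_comm _ _ (fun v => esym (MG v))) -(iter_comm _ _ (fun v => esym (MK v))).
case: s => /=; last by rewrite hM0 !iterZL.
by rewrite MS hM0 linearZ_LR !iterZL.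
Qed.

Lemma Mpbw k l s c : Mm (pbw o v0 k l s c) = m *: pbw o v0 k l s c.
Proof.
rewrite /pbw -/(w k l s) -(iter_comm _ _ (fun v => esym (Mch v))) Mw.
by rewrite iterZL.
Qed.

Lemma pbw_sumE n f : pbw_sum o v0 n f = sum4 n (fun k l s c => f k l s c *: pbw o v0 k l s c).
Proof. by []. Qed.

Lemma Mall v : Mm v = m *: v.
Proof.
have [n [f ->]] := hspan v.
rewrite pbw_sumE sum4_lin sum4Z; apply: sum4_ext => k l s c.
by rewrite linearZ_LR Mpbw !scalerA mulrC.
Qed.

Lemma P_iterG y k : Pp (iter k Gg y) = iter k Gg (Pp y) + (k%:R * m) *: iter k.-1 Gg y.
Proof.
elim: k => [|k IH] /=; first by rewrite mul0r scale0r addr0.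
rewrite PG Mall IH linearD linearZ_LR (kpred' Gg) -addrA -scalerDl.
by congr (_ + _); congr (_ *: _); rewrite -[in RHS]addn1 natrD mulrDl mul1r.
Qed.


Lemma kpredN (f : V -> V) k y : k%:R *: iter k.-1 f (f y) = k%:R *: iter k f y.
Proof. by case: k => [|k]; rewrite ?scale0r // iterSr. Qed.
Lemma kpredN' (f : V -> V) k y : k%:R *: f (iter k.-1 f y) = k%:R *: iter k f y.
Proof. by case: k => [|k]; rewrite ?scale0r. Qed.
Lemma kpredC (g f : V -> V) k y : k%:R *: g (f (iter k.-1 f y)) = k%:R *: g (iter k f y).
Proof. by case: k => [|k]; rewrite ?scale0r. Qed.
Lemma natS1 k : (k.+1%:R : R[i]) = k%:R + 1.
Proof. by rewrite -addn1 natrD. Qed.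

Lemma P_iterK y l : Pp (iter l Kk y) = iter l Kk (Pp y) + l%:R *: Gg (iter l.-1 Kk y).
Proof.
elim: l => [|l IH] /=; first by rewrite scale0r addr0.
rewrite PK IH linearD linearZ_LR -GK (kpredC Gg Kk) -addrA.
by congr (_ + _); rewrite natS1 scalerDl scale1r.
Qed.

Lemma Pw k l s : Pp (w k l s) = (k%:R * m) *: w k.-1 l s + l%:R *: w k.+1 l.-1 s
   + (if s then ch (w k l false) else 0).
Proof.
rewrite /w P_iterG P_iterK iterDL iterZL -iterSr.
case: s => /=.
  rewrite PS hP0 linear0 add0r hX0 (iter_comm _ _ Kch) (iter_comm _ _ Gch).
  by rewrite addrC (addrC (ch _)) addrA.
by rewrite hP0 !iter0L add0r addr0 addrC.
Qed.

Lemma chpbw k l s c : ch (pbw o v0 k l s c) = (if c then m / 2%:R else 1) *: pbw o v0 k l s (~~ c).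
Proof. by case: c => /=; rewrite ?scale1r // chch. Qed.

Lemma Ppbw k l s c : Pp (pbw o v0 k l s c) = (k%:R * m) *: pbw o v0 k.-1 l s c
   + l%:R *: pbw o v0 k.+1 l.-1 s c
   + (if s then (if c then (m / 2%:R) *: pbw o v0 k l false false else pbw o v0 k l false true) else 0).
Proof.
case: c; rewrite /pbw /= -?/(w _ _ _); last by rewrite Pw; case: s.
rewrite Pch Pw !linearD !linearZ_LR; case: s => //=; by rewrite ?linear0 ?chch.
Qed.

Lemma Q_iterG y k : Qq (iter k Gg y) = iter k Gg (Qq y) + k%:R *: iter k.-1 Gg (Xx y).
Proof.
elim: k => [|k IH] /=; first by rewrite scale0r addr0.
rewrite QG IH linearD linearZ_LR (kpredN' Gg) -(iter_comm _ _ (fun v => esym (XG v))) -addrA.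
by congr (_ + _); rewrite natS1 scalerDl scale1r.
Qed.

Lemma Q_iterK y l : Qq (iter l Kk y) = iter l Kk (Qq y) + l%:R *: iter l.-1 Kk (Ss y).
Proof.
elim: l => [|l IH] /=; first by rewrite scale0r addr0.
rewrite QK IH linearD linearZ_LR -(iter_comm _ _ (fun v => KS v)).
rewrite -[Kk (iter l.-1 Kk (Ss y))]/(iter l.-1.+1 Kk (Ss y)).
have e : l%:R *: iter l.-1.+1 Kk (Ss y) = l%:R *: iter l Kk (Ss y) by case: l {IH} => [|l]; rewrite ?scale0r.
by rewrite e -addrA natS1 scalerDl scale1r.
Qed.

Lemma QS0 : Qq (Ss v0) = dc *: v0.
Proof. by rewrite QS hQ0 linear0 oppr0 add0r hD0 opprK. Qed.

Lemma Qw0 k l : Qq (w k l false) = k%:R *: ch (w k.-1 l false) + l%:R *: w k l.-1 true.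
Proof.
rewrite /w /= Q_iterG Q_iterK hQ0 iter0L add0r iterZL.
rewrite -(iter_comm _ _ (fun v => esym (XK v))) hX0 (iter_comm _ _ Kch) (iter_comm _ _ Gch).
by rewrite addrC.
Qed.

Lemma Qw1 k l : Qq (w k l true) = k%:R *: ch (w k.-1 l true) + (dc - k%:R - l%:R) *: w k l false.
Proof.
rewrite /w /= Q_iterG Q_iterK QS0 SS iterNL scalerN (kpredN Kk) iterZL.
rewrite -(iter_comm _ _ (fun v => esym (XK v))) XS hX0 Sch opprK.
rewrite (@iterDL Kk) (@iterNL Kk) (iter_comm _ _ Kch) (iter_comm _ _ (fun v => esym (GK v))).
rewrite [iter k.-1 Gg _](@iterDL Gg) (@iterNL Gg) (iter_comm _ _ Gch) scalerDr scalerN (kpredN Gg).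
rewrite (@iterDL Gg) (@iterNL Gg) !iterZL !scalerBl addrC -addrA.
by congr (_ + _); rewrite addrA (addrC (- _)).
Qed.


Lemma Qpbw k l s c : Qq (pbw o v0 k l s c) =
  k%:R *: ((if c then - (m / 2%:R) else 1) *: pbw o v0 k.-1 l s (~~ c))
  + l%:R *: (if s then 0 else (if c then -1 else 1) *: pbw o v0 k l.-1 true c)
  + (if s then ((if c then -1 else 1) * (dc - k%:R - l%:R)) *: pbw o v0 k l false c else 0).
Proof.
case: c; case: s; rewrite /pbw /= -?/(w _ _ _).
- rewrite Qch Qw1 (linearD ch) !(linearZ_LR ch) chch /w scaler0 addr0 mulN1r !scaleNr scalerN opprD /=.
  by [].
- rewrite Qch Qw0 (linearD ch) !(linearZ_LR ch) chch /w addr0 !scaleNr scalerN opprD scale1r /=.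
  by rewrite scalerN.
- by rewrite Qw1 scaler0 addr0 !scale1r mul1r.
- by rewrite Qw0 addr0 !scale1r.
Qed.

Lemma D_iterG y k : Dd (iter k Gg y) = iter k Gg (Dd y) + k%:R *: iter k Gg y.
Proof.
elim: k => [|k IH] /=; first by rewrite scale0r addr0.
by rewrite DG IH linearD linearZ_LR -addrA (natS1 k) scalerDl scale1r.
Qed.

Lemma D_iterK y l : Dd (iter l Kk y) = iter l Kk (Dd y) + (2%:R * l%:R) *: iter l Kk y.
Proof.
elim: l => [|l IH] /=; first by rewrite mulr0 scale0r addr0.
by rewrite DK IH linearD linearZ_LR -addrA (natS1 l) mulrDr mulr1 (scalerDl _ (2%:R * l%:R)).
Qed.

Lemma Dw k l (s : bool) : Dd (w k l s) = (- dc + k%:R + 2%:R * l%:R + s%:R) *: w k l s.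
Proof.
rewrite /w D_iterG D_iterK iterDL !iterZL.
have -> : Dd (iter s Ss v0) = (- dc + s%:R) *: iter s Ss v0.
  case: s => /=; last by rewrite hD0 addr0 scaleNr.
  by rewrite DS hD0 linearN linearZ_LR scalerDl scaleNr scale1r.
rewrite iterZL iterZL -!scalerDl; congr (_ *: _).
by ring.
Qed.

Lemma Dpbw k l s c : Dd (pbw o v0 k l s c) = (- dc + k%:R + 2%:R * l%:R + s%:R) *: pbw o v0 k l s c.
Proof.
case: c; rewrite /pbw /= -?/(w _ _ _); last by rewrite Dw.
by rewrite Dch Dw linearZ_LR.
Qed.

Lemma Gpbw k l s c : Gg (pbw o v0 k l s c) = pbw o v0 k.+1 l s c.
Proof. by case: c => //=; rewrite Gch. Qed.

Lemma Kpbw k l s c : Kk (pbw o v0 k l s c) = pbw o v0 k l.+1 s c.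
Proof.
rewrite /pbw; case: c => /=; by rewrite ?Kch -(iter_comm _ _ GK).
Qed.


Definition supp N (f : nat -> nat -> bool -> bool -> R[i]) :=
  forall k l s c, ((N <= k)%N || (N <= l)%N) -> f k l s c = 0.

Lemma suppk N f k l s c : supp N f -> (N <= k)%N -> f k l s c = 0.
Proof. by move=> h hk; apply: h; rewrite hk. Qed.
Lemma suppl N f k l s c : supp N f -> (N <= l)%N -> f k l s c = 0.
Proof. by move=> h hl; apply: h; rewrite hl orbT. Qed.

Lemma psum_lin B a b f g : pbw_sum o v0 B (fun k l s c => a * f k l s c + b * g k l s c)
  = a *: pbw_sum o v0 B f + b *: pbw_sum o v0 B g.
Proof.
rewrite !pbw_sumE !sum4Z -sum4D; apply: sum4_ext => k l s c.
by rewrite scalerDl !scalerA.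
Qed.

Lemma psum_ind B f : pbw_sum o v0 B f = 0 ->
  forall k l s c, (k < B)%N -> (l < B)%N -> f k l s c = 0.
Proof. by move=> h k l s c hk hl; exact: (hind h (Ordinal hk) (Ordinal hl) s c). Qed.

Definition Pc (f : nat -> nat -> bool -> bool -> R[i]) k l s c :=
  (k.+1%:R * m) * f k.+1 l s c + (if k is k'.+1 then l.+1%:R * f k' l.+1 s c else 0)
  + (if s then 0 else (if c then f k l true false else m / 2%:R * f k l true true)).

Lemma P_sum N B f : supp N f -> (N < B)%N -> Pp (pbw_sum o v0 B f) = pbw_sum o v0 B (Pc f).
Proof.
move=> hf hB.
have hB' : (N <= B)%N by apply: ltnW.
have hB1 : (N <= B.-1)%N by case: B hB {hB'}.
rewrite !pbw_sumE sum4_lin.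
rewrite (@sum4_ext _ _ _ _ (fun k l s c => f k l s c *: ((k%:R * m) *: pbw o v0 k.-1 l s c)
   + f k l s c *: (l%:R *: pbw o v0 k.+1 l.-1 s c)
   + f k l s c *: (if s then (if c then (m / 2%:R) *: pbw o v0 k l false false else pbw o v0 k l false true) else 0))); last first.
  by move=> k l s c; rewrite (linearZ_LR Pp) Ppbw !scalerDr.
rewrite !sum4D /Pc.
rewrite (@sum4_ext _ _ _ (fun k l s c => ((k.+1%:R * m * f k.+1 l s c + (if k is k'.+1 then l.+1%:R * f k' l.+1 s c else 0)
  + (if s then 0 else (if c then f k l true false else m / 2%:R * f k l true true))) *: pbw o v0 k l s c))
   (fun k l s c => ((k.+1%:R * m) * f k.+1 l s c) *: pbw o v0 k l s c
   + (if k is k'.+1 then l.+1%:R * f k' l.+1 s c else 0) *: pbw o v0 k l s c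
   + (if s then 0 else (if c then f k l true false else m / 2%:R * f k l true true)) *: pbw o v0 k l s c)); last first.
  by move=> k l s c; rewrite !scalerDl.
rewrite !sum4D.
congr (_ + _ + _).
- rewrite sum4_kdown.
  + by apply: sum4_ext => k l s c /=; rewrite scalerA mulrC.
  + by move=> l s c; rewrite mul0r scale0r scaler0.
  + by move=> l s c; rewrite (suppk _ _ _ hf hB') scale0r.
- rewrite sum4_ldown; last 2 first.
  + by move=> k s c; rewrite scale0r scaler0.
  + by move=> k s c; rewrite (suppl _ _ _ hf hB') scale0r.
  rewrite sum4_kup; last by move=> l s c; rewrite (suppk _ _ _ hf hB1) scale0r.
  apply: sum4_ext => -[|k] l s c /=; first by rewrite scale0r.
  by rewrite scalerA mulrC.
- rewrite /sum4; apply: eq_bigr => k _; apply: eq_bigr => l _.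
  rewrite !big_bool /= !scaler0 !scale0r !addr0 !add0r scalerA addrC.
  by rewrite (mulrC (f k l true true)).
Qed.


Definition Qc (f : nat -> nat -> bool -> bool -> R[i]) k l s c :=
  k.+1%:R * (if c then 1 else - (m / 2%:R)) * f k.+1 l s (~~ c)
  + (if s then l.+1%:R * (if c then -1 else 1) * f k l.+1 false c else 0)
  + (if s then 0 else (if c then -1 else 1) * (dc - k%:R - l%:R) * f k l true c).

Lemma Q_sum N B f : supp N f -> (N < B)%N -> Qq (pbw_sum o v0 B f) = pbw_sum o v0 B (Qc f).
Proof.
move=> hf hB.
have hB' : (N <= B)%N by apply: ltnW.
rewrite !pbw_sumE sum4_lin.
rewrite (@sum4_ext _ _ _ _ (fun k l s c =>
     f k l s c *: (k%:R *: ((if c then - (m / 2%:R) else 1) *: pbw o v0 k.-1 l s (~~ c)))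
   + f k l s c *: (l%:R *: (if s then 0 else (if c then -1 else 1) *: pbw o v0 k l.-1 true c))
   + f k l s c *: (if s then ((if c then -1 else 1) * (dc - k%:R - l%:R)) *: pbw o v0 k l false c else 0))); last first.
  by move=> k l s c; rewrite (linearZ_LR Qq) Qpbw !scalerDr.
rewrite !sum4D /Qc.
rewrite (@sum4_ext _ _ _ (fun k l s c => ((k.+1%:R * (if c then 1 else - (m / 2%:R)) * f k.+1 l s (~~ c)
  + (if s then l.+1%:R * (if c then -1 else 1) * f k l.+1 false c else 0)
  + (if s then 0 else (if c then -1 else 1) * (dc - k%:R - l%:R) * f k l true c)) *: pbw o v0 k l s c))
   (fun k l s c => (k.+1%:R * (if c then 1 else - (m / 2%:R)) * f k.+1 l s (~~ c)) *: pbw o v0 k l s c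
   + (if s then l.+1%:R * (if c then -1 else 1) * f k l.+1 false c else 0) *: pbw o v0 k l s c
   + (if s then 0 else (if c then -1 else 1) * (dc - k%:R - l%:R) * f k l true c) *: pbw o v0 k l s c)); last first.
  by move=> k l s c; rewrite !scalerDl.
rewrite !sum4D.
congr (_ + _ + _).
- rewrite sum4_kdown; last 2 first.
  + by move=> l s c; rewrite scale0r scaler0.
  + by move=> l s c; rewrite (suppk _ _ _ hf hB') scale0r.
  rewrite sum4_cflip; apply: sum4_ext => k l s c /=.
  by case: c => /=; rewrite !scalerA; congr (_ *: _); ring.
- rewrite sum4_ldown; last 2 first.
  + by move=> k s c; rewrite scale0r scaler0.
  + by move=> k s c; rewrite (suppl _ _ _ hf hB') scale0r.
  rewrite sum4_sflip; apply: sum4_ext => k l s c /=.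
  by case: s; case: c => /=; rewrite ?scaler0 ?scale0r // !scalerA; congr (_ *: _); ring.
- rewrite sum4_sflip; apply: sum4_ext => k l s c /=.
  by case: s; case: c => /=; rewrite ?scaler0 ?scale0r // !scalerA; congr (_ *: _); ring.
Qed.

Lemma D_sum B f : Dd (pbw_sum o v0 B f) =
  pbw_sum o v0 B (fun k l s c => (- dc + k%:R + 2%:R * l%:R + s%:R) * f k l s c).
Proof.
rewrite !pbw_sumE sum4_lin; apply: sum4_ext => k l s c.
by rewrite (linearZ_LR Dd) Dpbw scalerA mulrC.
Qed.

Definition chc (f : nat -> nat -> bool -> bool -> R[i]) k l s c :=
  (if c then 1 else m / 2%:R) * f k l s (~~ c).

Lemma ch_sum B f : ch (pbw_sum o v0 B f) = pbw_sum o v0 B (chc f).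
Proof.
rewrite !pbw_sumE sum4_lin.
rewrite (@sum4_ext _ _ _ _ (fun k l s c => f k l s c *: ((if c then m / 2%:R else 1) *: pbw o v0 k l s (~~ c)))); last first.
  by move=> k l s c; rewrite (linearZ_LR ch) chpbw.
rewrite sum4_cflip; apply: sum4_ext => k l s c /=.
by rewrite /chc; case: c => /=; rewrite scalerA mulrC.
Qed.

Definition shG (f : nat -> nat -> bool -> bool -> R[i]) k l s c :=
  if k is k'.+1 then f k' l s c else 0.
Definition shK (f : nat -> nat -> bool -> bool -> R[i]) k l s c :=
  if l is l'.+1 then f k l' s c else 0.

Lemma G_sum N B f : supp N f -> (N < B)%N -> Gg (pbw_sum o v0 B f) = pbw_sum o v0 B (shG f).
Proof.
move=> hf hB; have hB1 : (N <= B.-1)%N by case: B hB.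
rewrite !pbw_sumE sum4_lin.
rewrite (@sum4_ext _ _ _ _ (fun k l s c => f k l s c *: pbw o v0 k.+1 l s c)); last first.
  by move=> k l s c; rewrite (linearZ_LR Gg) Gpbw.
rewrite sum4_kup; last by move=> l s c; rewrite (suppk _ _ _ hf hB1) scale0r.
by apply: sum4_ext => -[|k] l s c /=; rewrite ?scale0r.
Qed.

Lemma K_sum N B f : supp N f -> (N < B)%N -> Kk (pbw_sum o v0 B f) = pbw_sum o v0 B (shK f).
Proof.
move=> hf hB; have hB1 : (N <= B.-1)%N by case: B hB.
rewrite !pbw_sumE sum4_lin.
rewrite (@sum4_ext _ _ _ _ (fun k l s c => f k l s c *: pbw o v0 k l.+1 s c)); last first.
  by move=> k l s c; rewrite (linearZ_LR Kk) Kpbw.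
rewrite sum4_lup; last by move=> k s c; rewrite (suppl _ _ _ hf hB1) scale0r.
by apply: sum4_ext => k [|l] s c /=; rewrite ?scale0r.
Qed.

Lemma supp_Pc N f : supp N f -> supp N.+1 (Pc f).
Proof.
move=> hf k l s c hkl.
have h1 : f k.+1 l s c = 0 by apply: hf; lia.
have h3 : forall c', f k l true c' = 0 by move=> c'; apply: hf; lia.
rewrite /Pc h1 !h3 mulr0 add0r; case: k hkl {h1 h3} => [|k] hkl /=.
  by case: s; case: c; rewrite ?mulr0 ?addr0.
have h2 : f k l.+1 s c = 0 by apply: hf; lia.
by rewrite h2 {h2}; case: s; case: c; rewrite ?mulr0 ?addr0.
Qed.

Lemma supp_Qc N f : supp N f -> supp N.+1 (Qc f).
Proof.
move=> hf k l s c hkl.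
have h1 : f k.+1 l s (~~ c) = 0 by apply: hf; lia.
have h2 : f k l.+1 false c = 0 by apply: hf; lia.
have h3 : f k l true c = 0 by apply: hf; lia.
by rewrite /Qc h1 h2 h3 !mulr0 add0r {h1 h2 h3}; case: s; rewrite ?addr0.
Qed.

Lemma supp_shG N f : supp N f -> supp N.+1 (shG f).
Proof. move=> hf [|k] l s c hkl //=; apply: hf; lia. Qed.
Lemma supp_shK N f : supp N f -> supp N.+1 (shK f).
Proof. move=> hf k [|l] s c hkl //=; apply: hf; lia. Qed.
Lemma supp_chc N f : supp N f -> supp N (chc f).
Proof. by move=> hf k l s c hkl; rewrite /chc hf ?mulr0. Qed.
Lemma supp_lin N a b f g : supp N f -> supp N g -> supp N (fun k l s c => a * f k l s c + b * g k l s c).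
Proof. by move=> hf hg k l s c hkl; rewrite hf // hg // !mulr0 addr0. Qed.
Lemma supp_mono N N' f : (N <= N')%N -> supp N f -> supp N' f.
Proof. move=> hN hf k l s c hkl; apply: hf; lia. Qed.


Lemma mulI0 (a x : R[i]) : a != 0 -> a * x = 0 -> x = 0.
Proof. by move=> ha /eqP; rewrite mulf_eq0 (negbTE ha) => /eqP. Qed.

Lemma natS_neq0 k : (k.+1%:R : R[i]) != 0.
Proof. by rewrite pnatr_eq0. Qed.

Lemma m2_neq0 : - (m / 2%:R) != 0.
Proof. by rewrite oppr_eq0 mulf_neq0 // invr_eq0 two_neq0. Qed.

Lemma coreA f : (forall k l s c, Pc f k l s c = 0) -> (forall k l s c, Qc f k l s c = 0) ->
  forall l, (f 0%N l true true != 0) || (f 0%N l true false != 0) -> dc + 2%:R^-1 = l%:R.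
Proof.
move=> hP hQ l hne.
set X := dc + 2%:R^-1 - l%:R.
have h1 : m * (X * f 0%N l true true) = Pc f 0 l false false - m * Qc f 0 l false true.
  by rewrite /Pc /Qc /X /=; ring.
have h2 : X * f 0%N l true false = Qc f 0 l false false + 2%:R^-1 * Pc f 0 l false true.
  by rewrite /Pc /Qc /X /=; ring.
rewrite hP hQ mulr0 subr0 in h1; rewrite hP hQ mulr0 addr0 in h2.
have hX : X = 0.
  case/orP: hne => hne.
    by move: (mulI0 hm h1) => /eqP; rewrite mulf_eq0 (negbTE hne) orbF => /eqP.
  by move: h2 => /eqP; rewrite mulf_eq0 (negbTE hne) orbF => /eqP.
by apply/eqP; rewrite -subr_eq0 -/X hX.
Qed.

Lemma coreB1 f : (forall k l s c, Pc f k l s c = 0) ->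
  (forall l, f 0%N l true true = 0) -> (forall l, f 0%N l true false = 0) ->
  forall k l c, f k l true c = 0.
Proof.
move=> hP h0T h0F.
suff H : forall c k, (forall l, f k l true c = 0) /\ (forall l, f k.+1 l true c = 0).
  by move=> k l c; case: (H c k) => ->.
move=> c; elim=> [|k [IH1 IH2]].
  split; first by case: c.
  move=> l; have := hP 0%N l true c; rewrite /Pc /= addr0 addr0 mul1r.
  by move/(mulI0 hm).
split=> // l; have := hP k.+1 l true c; rewrite /Pc /= IH1 mulr0 !addr0.
by rewrite -mulrA; move/(mulI0 (natS_neq0 _)); move/(mulI0 hm).
Qed.

Lemma coreB f : (forall k l s c, Pc f k l s c = 0) -> (forall k l s c, Qc f k l s c = 0) ->
  (forall l, f 0%N l true true = 0) -> (forall l, f 0%N l true false = 0) ->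
  forall k l s c, ((0 < k)%N || (0 < l)%N || s) -> f k l s c = 0.
Proof.
move=> hP hQ h0T h0F.
have hT := coreB1 hP h0T h0F.
have hk : forall k l c, f k.+1 l false c = 0.
  move=> k l [].
    have := hQ k l false false; rewrite /Qc /= hT !mulr0 !addr0 -mulrA.
    by move/(mulI0 (natS_neq0 _)); move/(mulI0 m2_neq0).
  have := hQ k l false true; rewrite /Qc /= hT !mulr0 !addr0 mulr1.
  by move/(mulI0 (natS_neq0 _)).
have hl : forall k l c, f k l.+1 false c = 0.
  move=> k l [].
    have := hQ k l true true; rewrite /Qc /= hT !mulr0 add0r addr0 mulrN1 mulNr.
    by move/eqP; rewrite oppr_eq0 => /eqP; move/(mulI0 (natS_neq0 _)).
  have := hQ k l true false; rewrite /Qc /= hT !mulr0 add0r addr0 mulr1.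
  by move/(mulI0 (natS_neq0 _)).
move=> k l [] c; first by rewrite hT.
rewrite orbF; case: k => [|k]; last by rewrite hk.
by case: l => [|l] //; rewrite hl.
Qed.


Definition Tf (v : V) := Gg (Gg v) - (2%:R * m) *: Kk v.
Definition Yf (v : V) := Gg (Xx v) - m *: Ss v.

Lemma TD x y : Tf (x + y) = Tf x + Tf y.
Proof.
rewrite /Tf !(linearD Gg) (linearD Kk) scalerDr opprD !addrA.
by congr (_ + _); rewrite addrAC.
Qed.
Lemma TZ a x : Tf (a *: x) = a *: Tf x.
Proof. by rewrite /Tf !(linearZ_LR Gg) (linearZ_LR Kk) scalerBr !scalerA (mulrC a). Qed.

Lemma PT v : Pp (Tf v) = Tf (Pp v).
Proof.
rewrite /Tf (linearB Pp) (linearZ_LR Pp) !PG PK !Mall (linearD Gg) (linearZ_LR Gg).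
rewrite scalerDr (two_split m (Gg v)) opprD addrA -(addrA (Gg (Gg (Pp v)))).
by rewrite addrAC addrK.
Qed.

Lemma QT v : Qq (Tf v) = Tf (Qq v) + 2%:R *: Yf v.
Proof.
rewrite /Tf /Yf (linearB Qq) (linearZ_LR Qq) !QG QK XG (linearD Gg).
rewrite scalerDr opprD -(addrA (Gg (Gg (Qq v)))) addrACA.
by rewrite [in RHS]scalerBr scalerA [2%:R *: Gg (Xx v)]scaler_nat [Gg (Xx v) *+ 2]mulr2n.
Qed.

Lemma YT v : Yf (Tf v) = Tf (Yf v).
Proof.
rewrite /Yf /Tf (linearB Xx) (linearZ_LR Xx) !XG XK (linearB Ss) (linearZ_LR Ss).
rewrite !(linearB Gg) !(linearZ_LR Gg) (linearB Kk) (linearZ_LR Kk) -!GS -KS GK.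
rewrite !scalerBr !scalerA !opprD !opprK (mulrC m (2%:R * m)).
by rewrite addrACA.
Qed.

Lemma chT v : ch (Tf v) = Tf (ch v).
Proof. by rewrite /Tf (linearB ch) (linearZ_LR ch) -!Gch -Kch. Qed.

Lemma DT v : Dd (Tf v) = Tf (Dd v) + 2%:R *: Tf v.
Proof.
rewrite /Tf (linearB Dd) (linearZ_LR Dd) !DG DK (linearD Gg).
rewrite scalerDr opprD -(addrA (Gg (Gg (Dd v)))) addrACA.
rewrite [in RHS]scalerBr !scalerA [2%:R *: Gg (Gg v)]scaler_nat [Gg (Gg v) *+ 2]mulr2n.
by rewrite [(2%:R * m) * 2%:R]mulrC.
Qed.

Definition uf := Gg v0 - 2%:R *: ch (Ss v0).

Lemma Qu : Qq uf = (1 + 2%:R * dc) *: ch v0.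
Proof.
rewrite /uf (linearB Qq) (linearZ_LR Qq) QG hQ0 linear0 add0r hX0 Qch QS0 (linearZ_LR ch).
by rewrite scalerN opprK scalerA scalerDl scale1r.
Qed.

Lemma two_half : (2%:R * (m / 2%:R) : R[i]) = m.
Proof. by rewrite mulrC -mulrA mulVf ?two_neq0 // mulr1. Qed.

Lemma Xu : Xx uf = m *: Ss v0 - ch (Gg v0).
Proof.
rewrite /uf (linearB Xx) (linearZ_LR Xx) XG hX0 Xch XS hX0 Sch opprK (linearB ch) chch.
rewrite Gch scalerN opprK scalerBr scalerA two_half [2%:R *: ch _]scaler_nat mulr2n.
by rewrite opprD addrCA addNKr.
Qed.

Lemma Su : Ss uf = Gg (Ss v0) - 2%:R *: ch (Kk v0).
Proof.
rewrite /uf (linearB Ss) (linearZ_LR Ss) Sch SS (linearN ch) opprK -GS.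
by [].
Qed.

Lemma Yu : Yf uf = - ch (Tf v0).
Proof.
rewrite /Yf Xu Su (linearB Gg) (linearZ_LR Gg) Gch /Tf (linearB ch) (linearZ_LR ch) -!Gch -Kch.
rewrite scalerBr opprB addrC -addrA addKr opprB !scalerA (mulrC m 2%:R).
by [].
Qed.

Lemma Du : Dd uf = (- dc + 1) *: uf.
Proof.
rewrite /uf (linearB Dd) (linearZ_LR Dd) DG hD0 Dch DS hD0.
rewrite (linearN Gg) (linearZ_LR Gg) (linearN Ss) (linearZ_LR Ss) (linearD ch) (linearN ch) (linearZ_LR ch).
rewrite scalerBr !scalerDl !scaleNr !scale1r.
by congr (_ - _); rewrite scalerDr opprD addrACA.
Qed.


Definition delta k0 l0 s0 c0 : nat -> nat -> bool -> bool -> R[i] :=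
  fun k l s c => if (k == k0) && (l == l0) && (s == s0) && (c == c0) then 1 else 0.

Lemma ord_neq_nat B (k : 'I_B) k0 (hk : (k0 < B)%N) : k != Ordinal hk -> (k == k0 :> nat) = false.
Proof. by move=> h; apply/negbTE; move: h; apply: contra => /eqP e; apply/eqP; apply: val_inj. Qed.

Lemma psum_delta B k0 l0 s0 c0 : (k0 < B)%N -> (l0 < B)%N ->
  pbw_sum o v0 B (delta k0 l0 s0 c0) = pbw o v0 k0 l0 s0 c0.
Proof.
move=> hk hl; rewrite pbw_sumE /sum4 (bigD1 (Ordinal hk)) //= [X in _ + X]big1 ?addr0; last first.
  move=> k /(@ord_neq_nat _ _ _ hk) e; apply: big1 => l _; apply: big1 => s _; apply: big1 => c _.
  by rewrite /delta e scale0r.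
rewrite (bigD1 (Ordinal hl)) //= [X in _ + X]big1 ?addr0; last first.
  move=> l /(@ord_neq_nat _ _ _ hl) e; apply: big1 => s _; apply: big1 => c _.
  by rewrite /delta e andbF scale0r.
rewrite !big_bool /delta !eqxx /=.
by case: s0; case: c0 => /=; rewrite !scale0r ?scale1r ?add0r ?addr0.
Qed.

Definition trunc n (f : nat -> nat -> bool -> bool -> R[i]) : nat -> nat -> bool -> bool -> R[i] :=
  fun k l s c => if (k < n)%N && (l < n)%N then f k l s c else 0.

Lemma supp_trunc n f : supp n (trunc n f).
Proof. move=> k l s c hkl; rewrite /trunc; case: ifP => // /andP[h1 h2]; lia. Qed.

Lemma psum_trunc n f : pbw_sum o v0 n f = pbw_sum o v0 n (trunc n f).
Proof.
apply: eq_bigr => k _; apply: eq_bigr => l _; apply: eq_bigr => s _; apply: eq_bigr => c _.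
by rewrite /trunc !ltn_ord.
Qed.

Lemma psum_widen N B f : supp N f -> (N <= B)%N -> pbw_sum o v0 N f = pbw_sum o v0 B f.
Proof.
move=> hf hNB; rewrite !pbw_sumE /sum4.
rewrite (big_ord_widen B (fun k => \sum_(l < N) \sum_(s : bool) \sum_(c : bool) f k l s c *: pbw o v0 k l s c)) //.
rewrite big_mkcond; apply: eq_bigr => k _; case: ifP => hk.
  rewrite (big_ord_widen B (fun l => \sum_(s : bool) \sum_(c : bool) f k l s c *: pbw o v0 k l s c)) //.
  rewrite big_mkcond; apply: eq_bigr => l _; case: ifP => // hl.
  apply/esym; apply: big1 => s _; apply: big1 => c _; rewrite hf ?scale0r //; lia.
apply/esym; apply: big1 => l _; apply: big1 => s _; apply: big1 => c _; rewrite hf ?scale0r //; lia.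
Qed.

Lemma in_span f B : (forall k l s c, ((0 < k)%N || (0 < l)%N || s) -> f k l s c = 0) -> (0 < B)%N ->
  pbw_sum o v0 B f = f 0%N 0%N false false *: v0 + f 0%N 0%N false true *: ch v0.
Proof.
move=> hf hB.
rewrite pbw_sumE (@sum4_ext _ _ _ _ (fun k l s c => (f 0%N 0%N false false * delta 0 0 false false k l s c
   + f 0%N 0%N false true * delta 0 0 false true k l s c) *: pbw o v0 k l s c)); last first.
  move=> k l s c; congr (_ *: _); rewrite /delta.
  case: k => [|k]; last by rewrite hf //= !mulr0 addr0.
  case: l => [|l]; last by rewrite hf //= !mulr0 addr0.
  case: s; first by rewrite hf //= !mulr0 addr0.
  by case: c => /=; rewrite ?mulr0 ?mulr1 ?addr0 ?add0r.
by rewrite -pbw_sumE psum_lin !psum_delta.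
Qed.

Lemma dc_real (n : nat) : dc + 2%:R^-1 = n%:R -> d + 2%:R^-1 = n%:R.
Proof.
move=> h; apply: (@complexI R).
have e : Complex d 0 = real_complex R d by [].
rewrite rmorphD fmorphV !rmorph_nat; exact: h.
Qed.

Lemma real_dc (n : nat) : d + 2%:R^-1 = n%:R -> dc + 2%:R^-1 = n%:R.
Proof.
move=> h; have e : Complex d 0 = real_complex R d by [].
have h2 := congr1 (real_complex R) h; rewrite rmorphD fmorphV !rmorph_nat in h2; exact: h2.
Qed.


Lemma iterTZ j a x : iter j Tf (a *: x) = a *: iter j Tf x.
Proof. exact: iterZ TZ. Qed.
Lemma iterTN j x : iter j Tf (- x) = - iter j Tf x.
Proof. by rewrite -scaleN1r iterTZ scaleN1r. Qed.
Lemma iterT0 j : iter j Tf 0 = 0.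
Proof. by elim: j => //= j ->; rewrite /Tf !(linear0 Gg) (linear0 Kk) scaler0 subr0. Qed.

Lemma Q_vs j : Qq (iter j Tf uf) = (1 + 2%:R * dc - 2%:R * j%:R) *: ch (iter j Tf v0).
Proof.
elim: j => [|j IH]; first by rewrite /= Qu mulr0 subr0.
rewrite [iter j.+1 Tf uf]/= QT IH TZ -chT.
rewrite -(iter_comm _ _ (fun v => esym (YT v))) Yu iterTN.
rewrite (iter_comm _ _ (fun v => esym (chT v))) -iterSr scalerN -scaleNr -scalerDl.
by congr (_ *: _); rewrite natS1; ring.
Qed.

Lemma Pu : Pp uf = 0.
Proof.
rewrite /uf (linearB Pp) (linearZ_LR Pp) PG hP0 linear0 add0r Mall Pch PS hP0 linear0 add0r hX0 chch.
by rewrite scalerA two_half subrr.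
Qed.

Lemma P_vs j : Pp (iter j Tf uf) = 0.
Proof. by rewrite -(iter_comm _ _ (fun v => esym (PT v))) Pu iterT0. Qed.

Lemma D_vs j : Dd (iter j Tf uf) = (- dc + 1 + 2%:R * j%:R) *: iter j Tf uf.
Proof.
elim: j => [|j IH]; first by rewrite /= Du mulr0 addr0.
rewrite [iter j.+1 Tf uf]/= DT IH TZ -scalerDl.
by congr (_ *: _); rewrite natS1; ring.
Qed.

Lemma H_of_Q v : Qq v = 0 -> Hh v = 0.
Proof.
move=> hq; have := QQ v; rewrite hq linear0 addr0 => /eqP.
rewrite eq_sym oppr_eq0 scaler_eq0 (negbTE two_neq0) /= => /eqP //.
Qed.

Definition Tc (f : nat -> nat -> bool -> bool -> R[i]) : nat -> nat -> bool -> bool -> R[i] :=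
  fun k l s c => 1 * shG (shG f) k l s c + - (2%:R * m) * shK f k l s c.

Lemma T_sum N B f : supp N f -> (N.+2 <= B)%N -> Tf (pbw_sum o v0 B f) = pbw_sum o v0 B (Tc f).
Proof.
move=> hf hB; rewrite /Tc psum_lin /Tf.
rewrite (G_sum hf) //; last by lia.
rewrite (G_sum (supp_shG hf)) //.
rewrite (K_sum hf) //; last by lia.
by rewrite scale1r scaleNr.
Qed.

Lemma supp_Tc N f : supp N f -> supp N.+2 (Tc f).
Proof.
move=> hf; apply: supp_lin; first exact: supp_shG (supp_shG hf).
by apply: (supp_mono _ (supp_shK hf)).
Qed.

Definition gu := fun k l s c => 1 * delta 1 0 false false k l s c + (- 2%:R) * delta 0 0 true true k l s c.

Lemma supp_gu : supp 2 gu.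
Proof.
move=> k l s c hkl; rewrite /gu /delta.
have -> : (k == 1%N) && (l == 0%N) = false by apply/negbTE; apply/negP => /andP[/eqP h1 /eqP h2]; lia.
have -> : (k == 0%N) && (l == 0%N) = false by apply/negbTE; apply/negP => /andP[/eqP h1 /eqP h2]; lia.
by rewrite /= !mulr0 addr0.
Qed.

Lemma uf_sum B : (2 <= B)%N -> uf = pbw_sum o v0 B gu.
Proof.
move=> hB; rewrite /gu psum_lin !psum_delta //; try lia.
by rewrite scale1r scaleNr.
Qed.

Definition gs j := iter j Tc gu.

Lemma vs_sum j : supp (2 * j + 2) (gs j) /\
  forall B, (2 * j + 2 < B)%N -> iter j Tf uf = pbw_sum o v0 B (gs j).
Proof.
elim: j => [|j [IH1 IH2]].
  split; first exact: supp_gu.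
  by move=> B hB; apply: uf_sum; lia.
have hs : supp (2 * j.+1 + 2) (gs j.+1).
  have e : (2 * j.+1 + 2 = (2 * j + 2).+2)%N by lia.
  by rewrite e; apply: supp_Tc.
split=> // B hB.
rewrite [iter j.+1 Tf uf]/= (IH2 B) ?(T_sum IH1) //; lia.
Qed.

Lemma gs_coef j : gs j 0%N j true true = - 2%:R * (- (2%:R * m)) ^+ j
   /\ gs j 0%N j true false = 0 /\ (forall c, gs j 0%N 0%N false c = 0).
Proof.
elim: j => [|j [IH1 [IH2 IH3]]].
  by rewrite /gs /= /gu /delta /= !mulr0 !mulr1 add0r !addr0; split=> // c; rewrite !mulr0 addr0.
rewrite /gs /= -/(gs j) /Tc /shG /shK /=.
by rewrite IH1 IH2 !mulr0 !add0r exprS mulrCA; split=> // c; rewrite mulr0 mulr0 addr0.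
Qed.


Lemma sing_coef w B N f : supp N f -> (N < B)%N -> w = pbw_sum o v0 B f -> Pp w = 0 -> Qq w = 0 ->
  (forall k l s c, Pc f k l s c = 0) /\ (forall k l s c, Qc f k l s c = 0).
Proof.
move=> hf hB hw hP hQ; rewrite hw in hP hQ.
rewrite (P_sum hf hB) in hP; rewrite (Q_sum hf hB) in hQ.
split=> k l s c.
  case: (ltnP k B) => hk; last by apply: (supp_Pc hf); lia.
  case: (ltnP l B) => hl; last by apply: (supp_Pc hf); lia.
  exact: (psum_ind hP).
case: (ltnP k B) => hk; last by apply: (supp_Qc hf); lia.
case: (ltnP l B) => hl; last by apply: (supp_Qc hf); lia.
exact: (psum_ind hQ).
Qed.

Lemma get_rep w : exists N f, supp N f /\ forall B, (N <= B)%N -> w = pbw_sum o v0 B f.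
Proof.
have [n [f0 ->]] := hspan w.
exists n, (trunc n f0); split; first exact: supp_trunc.
by move=> B hB; rewrite psum_trunc (psum_widen (@supp_trunc n f0) hB).
Qed.

Lemma D_coef w B N f lam : supp N f -> (N <= B)%N -> w = pbw_sum o v0 B f -> Dd w = lam *: w ->
  forall k l (s c : bool), ((- dc + k%:R + 2%:R * l%:R + s%:R) - lam) * f k l s c = 0.
Proof.
move=> hf hB hw hD k l s c.
case: (ltnP k B) => hk; last by rewrite (suppk _ _ _ hf) ?mulr0 //; lia.
case: (ltnP l B) => hl; last by rewrite (suppl _ _ _ hf) ?mulr0 //; lia.
have h0 : pbw_sum o v0 B (fun k l (s c : bool) => 1 * ((- dc + k%:R + 2%:R * l%:R + s%:R) * f k l s c)
            + (-1) * (lam * f k l s c)) = 0.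
  rewrite psum_lin -D_sum.
  have -> : pbw_sum o v0 B (fun k l s c => lam * f k l s c) = lam *: pbw_sum o v0 B f.
    by rewrite !pbw_sumE sum4Z; apply: sum4_ext => k' l' s' c'; rewrite scalerA.
  by rewrite -hw hD scale1r scaleN1r subrr.
have := psum_ind h0 s c hk hl.
by rewrite mul1r mulN1r mulrBl.
Qed.

Lemma f00 w lam N f : supp N f -> (forall B, (N <= B)%N -> w = pbw_sum o v0 B f) ->
  Dd w = lam *: w -> ~ (exists a b : R[i], w = a *: v0 + b *: ch v0) ->
  forall c, f 0%N 0%N false c = 0.
Proof.
move=> hf hw hD hnot c; apply/eqP; apply: contraT => hne; exfalso.
have hDc := D_coef hf (leqnn N) (hw _ (leqnn N)) hD.
have hlam : lam = - dc.
  have := hDc 0%N 0%N false c; move/eqP; rewrite mulf_eq0 (negbTE hne) orbF.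
  by rewrite !mulr0 !addr0 subr_eq0 => /eqP <-.
apply: hnot; exists (f 0%N 0%N false false), (f 0%N 0%N false true).
rewrite (hw N.+1 (leqnSn N)); apply: in_span => // k l s c' hpos.
have := hDc k l s c'; rewrite hlam.
have -> : - dc + k%:R + 2%:R * l%:R + s%:R - - dc = ((k + 2 * l + s)%N%:R : R[i]).
  by rewrite !natrD; ring.
have hn : (k + 2 * l + s != 0)%N.
  by case: s hpos => /=; [rewrite addn1 | rewrite orbF addn0 => h; lia].
by apply: mulI0; rewrite pnatr_eq0.
Qed.

Lemma nec w : singular o v0 w -> exists n : nat, d + 2%:R^-1 = n%:R.
Proof.
case=> [[lam hD] hnot hH hP hQ].
have [N [f [hf hw]]] := get_rep w.
have [hPc hQc] := sing_coef hf (ltnSn N) (hw _ (leqnSn N)) hP hQ.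
case: (boolP [exists l : 'I_N.+1, (f 0%N l true true != 0) || (f 0%N l true false != 0)]).
  move=> /existsP [l hl]; exists l; apply: dc_real; exact: (coreA hPc hQc hl).
move=> /existsPn hall; exfalso; apply: hnot.
exists (f 0%N 0%N false false), (f 0%N 0%N false true).
rewrite (hw N.+1 (leqnSn N)); apply: in_span => //.
have hz : forall l c, f 0%N l true c = 0.
  move=> l c; case: (ltnP l N.+1) => hl; last by rewrite (suppl _ _ _ hf) //; lia.
  have := hall (Ordinal hl); rewrite negb_or !negbK => /andP[/eqP h1 /eqP h2].
  by case: c.
by apply: (coreB hPc hQc) => l; rewrite hz.
Qed.


Lemma gamma_neq0 n : - 2%:R * (- (2%:R * m)) ^+ n != 0.
Proof.
rewrite mulf_neq0 ?oppr_eq0 ?two_neq0 // expf_neq0 // oppr_eq0 mulf_neq0 ?two_neq0 //.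
Qed.

Lemma suff_sing n : d + 2%:R^-1 = n%:R -> unique_singular o v0 (vs_formula o m v0 n).
Proof.
move=> h.
have hv : vs_formula o m v0 n = iter n Tf uf by [].
have hdc := real_dc h.
have hQv : Qq (iter n Tf uf) = 0.
  rewrite Q_vs.
  have -> : 1 + 2%:R * dc - 2%:R * n%:R = 0.
    have e : dc = n%:R - 2%:R^-1 by rewrite -hdc addrK.
    by rewrite e mulrBr mulfV ?two_neq0 //; ring.
  by rewrite scale0r.
have [hs hsum] := vs_sum n.
have [g1 [g2 g3]] := gs_coef n.
rewrite hv; split.
  split.
  - by exists (- dc + 1 + 2%:R * n%:R); rewrite D_vs.
  - move=> [a [b e]].
    have hB : (2 * n + 2 < 2 * n + 3)%N by lia.
    rewrite (hsum _ hB) in e.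
    have e2 : a *: v0 + b *: ch v0 = pbw_sum o v0 (2 * n + 3) (fun k l s c =>
        a * delta 0 0 false false k l s c + b * delta 0 0 false true k l s c).
      by rewrite psum_lin !psum_delta //; lia.
    have e3 : pbw_sum o v0 (2 * n + 3) (fun k l s c => 1 * gs n k l s c + (-1) *
        (a * delta 0 0 false false k l s c + b * delta 0 0 false true k l s c)) = 0.
      by rewrite psum_lin -e2 -e scale1r scaleN1r subrr.
    have hb1 : (0 < 2 * n + 3)%N by lia.
    have hb2 : (n < 2 * n + 3)%N by lia.
    have := psum_ind e3 true true hb1 hb2.
    rewrite /delta /= !andbF !mulr0 addr0 mulr0 addr0 mul1r g1 => h0.
    by move: (gamma_neq0 n); rewrite h0 eqxx.
  - by apply: H_of_Q.
  - exact: P_vs.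
  - exact: hQv.
move=> w [[lam hD] hnot hH hP hQ].
have [N [f [hf hw]]] := get_rep w.
set B := (N + 2 * n + 3)%N.
set gm := - 2%:R * (- (2%:R * m)) ^+ n.
have hgm : gm != 0 by apply: gamma_neq0.
have hm2 : m / 2%:R * gm != 0.
  by rewrite mulf_neq0 // mulf_neq0 // invr_eq0 two_neq0.
set lam1 := f 0%N n true true / gm.
set mu := f 0%N n true false / (m / 2%:R * gm).
exists lam1, mu.
have hvs : iter n Tf uf = pbw_sum o v0 B (gs n) by apply: hsum; rewrite /B; lia.
set g := fun k l s c => lam1 * gs n k l s c + mu * chc (gs n) k l s c.
have hg : lam1 *: iter n Tf uf + mu *: ch (iter n Tf uf) = pbw_sum o v0 B g.
  by rewrite /g psum_lin -ch_sum -hvs.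
set hh := fun k l s c => 1 * f k l s c + (-1) * g k l s c.
have hwB : w = pbw_sum o v0 B f by apply: hw; rewrite /B; lia.
have hhh : w - (lam1 *: iter n Tf uf + mu *: ch (iter n Tf uf)) = pbw_sum o v0 B hh.
  by rewrite /hh psum_lin -hg -hwB scale1r scaleN1r.
have hsh : supp (N + 2 * n + 2) hh.
  apply: supp_lin; first by apply: (supp_mono _ hf); lia.
  apply: supp_lin; first by apply: (supp_mono _ hs); lia.
  by apply: supp_chc; apply: (supp_mono _ hs); lia.
have hPw : Pp (w - (lam1 *: iter n Tf uf + mu *: ch (iter n Tf uf))) = 0.
  rewrite (linearB Pp) (linearD Pp) !(linearZ_LR Pp) Pch P_vs (linear0 ch).
  by rewrite hP !scaler0 addr0 subr0.
have hQw : Qq (w - (lam1 *: iter n Tf uf + mu *: ch (iter n Tf uf))) = 0.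
  rewrite (linearB Qq) (linearD Qq) !(linearZ_LR Qq) Qch hQv (linear0 ch) oppr0.
  by rewrite hQ !scaler0 addr0 subr0.
have hNB : (N + 2 * n + 2 < B)%N by rewrite /B; lia.
have [hPc hQc] := sing_coef hsh hNB hhh hPw hQw.
have hne : forall l, l != n -> hh 0%N l true true = 0 /\ hh 0%N l true false = 0.
  move=> l hln.
  case: (boolP ((hh 0%N l true true != 0) || (hh 0%N l true false != 0))) => hc.
    have := coreA hPc hQc hc; rewrite hdc => /eqP; rewrite eqr_nat eq_sym (negbTE hln) //.
  by move: hc; rewrite negb_or !negbK => /andP[/eqP -> /eqP ->].
have h0T : forall l, hh 0%N l true true = 0.
  move=> l; case: (eqVneq l n) => [->|hln]; last by case: (hne l hln).
  by rewrite /hh /g /chc /= g1 g2 !mulr0 addr0 mul1r /lam1 divfK // mulN1r addrN.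
have h0F : forall l, hh 0%N l true false = 0.
  move=> l; case: (eqVneq l n) => [->|hln]; last by case: (hne l hln).
  rewrite /hh /g /chc /= g1 g2 mulr0 add0r mul1r /mu divfK //.
  by rewrite mulN1r addrN.
have hz := coreB hPc hQc h0T h0F.
have hf00 := f00 hf hw hD hnot.
have hall : forall k l s c, hh k l s c = 0.
  move=> k l s c; case: (boolP ((0 < k)%N || (0 < l)%N || s)) => hpos; first exact: hz.
  move: hpos; rewrite !negb_or -!leqNgt !leqn0 => /andP[/andP[/eqP -> /eqP ->] /negbTE ->].
  by rewrite /hh /g /chc g3 g3 hf00 !(mulr0, addr0).
have : pbw_sum o v0 B hh = 0.
  rewrite pbw_sumE -(sum4_0 V B); apply: sum4_ext => k l s c; by rewrite hall scale0r.
by rewrite -hhh => /eqP; rewrite subr_eq0 => /eqP.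
Qed.

End Main.

End Aux.
Import Aux.

Theorem proposition1 (R : realType) (V : lmodType R[i]) (o : s11_ops V)
  (d : R) (m : R[i]) (v0 : V) :
  m != 0 -> is_verma o d m v0 ->
  ((exists vs : V, unique_singular o v0 vs) <->
   (exists n : nat, d + 2%:R^-1 = n%:R)) /\
  (forall n : nat, d + 2%:R^-1 = n%:R ->
     unique_singular o v0 (vs_formula o m v0 n)).
Proof.
move=> hm [hrep hodd [hQ0 [hP0 [_ [hD0 [hM0 hX0]]]]] hspan hind].
have hs := suff_sing hm hrep hodd hQ0 hP0 hD0 hM0 hX0 hspan hind.
have hn := nec hm hrep hodd hQ0 hP0 hD0 hM0 hX0 hspan hind.
split=> //; split.
- by case=> vs [hsing _]; apply: hn hsing.
- by case=> n hn'; exists (vs_formula o m v0 n); apply: hs.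
Qed.
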